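(* Let $\alpha\in(1,2)$, $H\in\left(\frac{2-\alpha}{2},\frac12\right)$, $t>0$, and $h(\xi):=\big(1-e^{-2t\xi^\alpha}\big)\xi^{1-2H-\alpha}$ for $\xi>0$. Then $$\int_0^\infty h(\xi)\cos(\xi r)\,d\xi=O\big(r^{\frac{H-1}{2}}\big)\quad\text{as } r\to\infty.$$
   Context: The integral is understood as an improper Riemann integral $\lim_{R\to\infty}\int_0^R$. *)

(* Defs.v *)
From Stdlib Require Import Reals.
From Coquelicot Require Import Coquelicot.
Open Scope R_scope.

(* h(xi) = (1 - exp(-2 t xi^alpha)) * xi^(1 - 2H - alpha) for xi > 0;
   the value at xi <= 0 is irrelevant for the integral over [0, R]; we set it to 0. *)
Definition h (alpha H t xi : R) : R :=
  if Rlt_dec 0 xi then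
    (1 - exp (- (2 * t * Rpower xi alpha))) * Rpower xi (1 - 2 * H - alpha)
  else 0.

Definition is_improper_RInt_0_oo (f : R -> R) (I : R) : Prop :=
  (forall Rb : R, 0 <= Rb -> ex_RInt f 0 Rb) /\
  is_lim (fun Rb => RInt f 0 Rb) p_infty I.

(* Main.v *)
Require Import Defs.
From Stdlib Require Import Reals Lra.
From Coquelicot Require Import Coquelicot.
Open Scope R_scope.
Definition h0 (alpha H t x : R) : R :=
  (1 - exp (- (2 * t * exp (alpha * ln x)))) * exp ((1 - 2 * H - alpha) * ln x).
Definition dh0 (alpha H t x : R) : R :=
  2 * t * alpha * exp (- (2 * t * exp (alpha * ln x))) * exp ((1 - 2 * H) * ln x) / x
  + (1 - exp (- (2 * t * exp (alpha * ln x)))) * (1 - 2 * H - alpha)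
      * exp ((1 - 2 * H - alpha) * ln x) / x.
Lemma h0_derive alpha H t x : 0 < x -> is_derive (h0 alpha H t) x (dh0 alpha H t x).
Proof.
intros Hx. unfold h0. auto_derive. lra.
unfold dh0.
replace ((1 - 2 * H) * ln x) with (alpha * ln x + (1 - 2*H - alpha) * ln x) by ring.
rewrite exp_plus. field. lra.
Qed.

Lemma exp_mono x y : x <= y -> exp x <= exp y.
Proof. intros [H|H]. left; apply exp_increasing; auto. subst; lra. Qed.
Lemma exp_le1 x : x <= 0 -> exp x <= 1.
Proof. intros; rewrite <- exp_0; apply exp_mono; auto. Qed.
Lemma ln_nonneg x : 1 <= x -> 0 <= ln x.
Proof. intros [H|H]. left; rewrite <- ln_1; apply ln_increasing; lra. subst; rewrite ln_1; lra. Qed.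
Lemma ln_nonpos x : 0 < x -> x <= 1 -> ln x <= 0.
Proof. intros H0 [H|H]. left; rewrite <- ln_1; apply ln_increasing; lra. subst; rewrite ln_1; lra. Qed.

Lemma E_le1 X : 0 <= X -> exp (- X) <= 1.
Proof. intros; apply exp_le1; lra. Qed.
Lemma one_minus_E X : 1 - exp (- X) <= X.
Proof. generalize (exp_ineq1_le (- X)); lra. Qed.
Lemma one_minus_E_nonneg X : 0 <= X -> 0 <= 1 - exp (- X).
Proof. intros; generalize (E_le1 X H); lra. Qed.
Lemma XE_le1 X : 0 <= X -> X * exp (- X) <= 1.
Proof.
intros HX. rewrite exp_Ropp. generalize (exp_ineq1_le X) (exp_pos X); intros.
apply Rmult_le_reg_r with (exp X); auto.
rewrite Rmult_assoc, Rinv_l by lra. lra.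
Qed.

Lemma h0_bound_small alpha H t x : 1 < alpha < 2 -> (2 - alpha)/2 < H < 1/2 -> 0 < t -> 0 < x ->
  Rabs (h0 alpha H t x) <= 2 * t * exp ((1 - 2 * H) * ln x).
Proof.
intros Ha HH Ht Hx. unfold h0.
set (u := ln x). set (X := 2 * t * exp (alpha * u)).
assert (HX : 0 <= X) by (unfold X; generalize (exp_pos (alpha * u)); nra).
rewrite Rabs_pos_eq.
2:{ apply Rmult_le_pos. apply one_minus_E_nonneg; auto. left; apply exp_pos. }
apply Rle_trans with (X * exp ((1 - 2 * H - alpha) * u)).
apply Rmult_le_compat_r. left; apply exp_pos. apply one_minus_E.
unfold X. rewrite Rmult_assoc, <- exp_plus.
replace (alpha * u + (1 - 2 * H - alpha) * u) with ((1 - 2 * H) * u) by ring. lra.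
Qed.

Lemma h0_bound_le1 alpha H t x : 1 < alpha < 2 -> (2 - alpha)/2 < H < 1/2 -> 0 < t -> 0 < x -> x <= 1 ->
  Rabs (h0 alpha H t x) <= 2 * t.
Proof.
intros Ha HH Ht Hx Hx1. eapply Rle_trans. apply h0_bound_small; auto.
generalize (ln_nonpos x Hx Hx1); intros.
assert (exp ((1 - 2 * H) * ln x) <= 1) by (apply exp_le1; nra). nra.
Qed.

Lemma h0_bound_ge1 alpha H t x : 1 < alpha < 2 -> (2 - alpha)/2 < H < 1/2 -> 0 < t -> 1 <= x ->
  Rabs (h0 alpha H t x) <= / x.
Proof.
intros Ha HH Ht Hx. unfold h0.
generalize (ln_nonneg x Hx); intros Hu.
set (u := ln x) in *. set (X := 2 * t * exp (alpha * u)).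
assert (HX : 0 <= X) by (unfold X; generalize (exp_pos (alpha * u)); nra).
rewrite Rabs_pos_eq.
2:{ apply Rmult_le_pos. apply one_minus_E_nonneg; auto. left; apply exp_pos. }
replace (/ x) with (1 * exp (- u)).
2:{ unfold u. rewrite exp_Ropp, exp_ln by lra. ring. }
apply Rmult_le_compat. apply one_minus_E_nonneg; auto. left; apply exp_pos.
generalize (exp_pos (- X)); lra.
apply exp_mono. nra.
Qed.

Lemma dh0_bound alpha H t x : 1 < alpha < 2 -> (2 - alpha)/2 < H < 1/2 -> 0 < t -> 0 < x ->
  Rabs (dh0 alpha H t x) <= (alpha * (2 * t + 1) + 3 * (1 + 2 * t)) / (x * x).
Proof.
intros Ha HH Ht Hx. unfold dh0.
set (u := ln x). set (X := 2 * t * exp (alpha * u)).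
assert (HX : 0 <= X) by (unfold X; generalize (exp_pos (alpha * u)); nra).
assert (Hxe : x = exp u) by (unfold u; rewrite exp_ln; auto).
assert (HE1 := E_le1 X HX). assert (HE0 := exp_pos (- X)).
assert (H1E := one_minus_E X). assert (H1E0 := one_minus_E_nonneg X HX).
assert (HXE := XE_le1 X HX).
assert (K1 : 2 * t * alpha * exp (- X) * exp ((2 - 2 * H) * u) <= alpha * (2 * t + 1)).
{ destruct (Rle_dec u 0) as [Hu|Hu].
  - assert (exp ((2 - 2 * H) * u) <= 1) by (apply exp_le1; nra).
    generalize (exp_pos ((2 - 2 * H) * u)); intros. 
    assert (0 <= t * alpha * exp (- X) * (1 - exp ((2 - 2 * H) * u))).
    { repeat apply Rmult_le_pos; lra. }
    assert (0 <= t * alpha * (1 - exp (- X))) by (repeat apply Rmult_le_pos; lra).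
    nra.
  - replace (2 * t * alpha * exp (- X) * exp ((2 - 2 * H) * u))
      with (alpha * (X * exp (- X)) * exp ((2 - 2 * H - alpha) * u)).
    2:{ unfold X. replace ((2 - 2 * H) * u) with (alpha * u + (2 - 2 * H - alpha) * u) by ring.
        rewrite exp_plus. ring. }
    assert (exp ((2 - 2 * H - alpha) * u) <= 1) by (apply exp_le1; nra).
    generalize (exp_pos ((2 - 2 * H - alpha) * u)); intros.
    assert (0 <= X * exp (- X)) by (apply Rmult_le_pos; lra).
    assert (alpha * (X * exp (- X)) * exp ((2 - 2 * H - alpha) * u) <= alpha * 1 * 1).
    { apply Rmult_le_compat; try nra. }
    nra. }
assert (K2 : (1 - exp (- X)) * (alpha + 2 * H - 1) * exp ((2 - 2 * H - alpha) * u) <= 3 * (1 + 2 * t)).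
{ destruct (Rle_dec u 0) as [Hu|Hu].
  - apply Rle_trans with (X * (alpha + 2 * H - 1) * exp ((2 - 2 * H - alpha) * u)).
    { apply Rmult_le_compat_r. left; apply exp_pos. apply Rmult_le_compat_r; lra. }
    replace (X * (alpha + 2 * H - 1) * exp ((2 - 2 * H - alpha) * u))
      with (2 * t * (alpha + 2 * H - 1) * exp ((2 - 2 * H) * u)).
    2:{ unfold X. replace ((2 - 2 * H) * u) with (alpha * u + (2 - 2 * H - alpha) * u) by ring.
        rewrite exp_plus. ring. }
    assert (exp ((2 - 2 * H) * u) <= 1) by (apply exp_le1; nra).
    generalize (exp_pos ((2 - 2 * H) * u)); intros.
    assert (2 * t * (alpha + 2 * H - 1) * exp ((2 - 2 * H) * u) <= 2 * t * (alpha + 2 * H - 1) * 1).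
    { apply Rmult_le_compat_l; nra. }
    nra.
  - assert (exp ((2 - 2 * H - alpha) * u) <= 1) by (apply exp_le1; nra).
    generalize (exp_pos ((2 - 2 * H - alpha) * u)); intros.
    assert ((1 - exp (- X)) * (alpha + 2 * H - 1) * exp ((2 - 2 * H - alpha) * u) <= 1 * 3 * 1).
    { apply Rmult_le_compat; try nra; try (apply Rmult_le_pos; nra); apply Rmult_le_compat; nra. }
    nra. }
assert (Hx2 : 0 < x * x) by nra.
replace (2 * t * alpha * exp (- X) * exp ((1 - 2 * H) * u) / x +
   (1 - exp (- X)) * (1 - 2 * H - alpha) * exp ((1 - 2 * H - alpha) * u) / x)
  with ((2 * t * alpha * exp (- X) * exp ((2 - 2 * H) * u)
        - (1 - exp (- X)) * (alpha + 2 * H - 1) * exp ((2 - 2 * H - alpha) * u)) / (x * x)).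
2:{ replace ((2 - 2 * H) * u) with ((1 - 2 * H) * u + u) by ring.
    replace ((2 - 2 * H - alpha) * u) with ((1 - 2 * H - alpha) * u + u) by ring.
    rewrite !exp_plus, <- Hxe. field. lra. }
unfold Rdiv. rewrite Rabs_mult, (Rabs_pos_eq (/ (x * x))) by (left; apply Rinv_0_lt_compat; auto).
apply Rmult_le_compat_r. left; apply Rinv_0_lt_compat; auto.
assert (0 <= 2 * t * alpha * exp (- X) * exp ((2 - 2 * H) * u)).
{ generalize (exp_pos ((2 - 2 * H) * u)); intros. repeat apply Rmult_le_pos; lra. }
assert (0 <= (1 - exp (- X)) * (alpha + 2 * H - 1) * exp ((2 - 2 * H - alpha) * u)).
{ generalize (exp_pos ((2 - 2 * H - alpha) * u)); intros. repeat apply Rmult_le_pos; lra. }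
apply Rabs_le. lra.
Qed.

Lemma h_eq_h0 alpha H t x : 0 < x -> h alpha H t x = h0 alpha H t x.
Proof. intros Hx. unfold h, h0, Rpower. destruct (Rlt_dec 0 x); [reflexivity|lra]. Qed.

Lemma locally_pos x : 0 < x -> locally x (fun y => 0 < y).
Proof.
intros Hx. exists (mkposreal x Hx). intros y Hy. simpl in Hy.
unfold ball in Hy; simpl in Hy; unfold AbsRing_ball, abs, minus, plus, opp in Hy; simpl in Hy.
apply Rabs_lt_between in Hy. lra.
Qed.

Lemma h_cont_pos alpha H t x : 0 < x -> continuous (h alpha H t) x.
Proof.
intros Hx. apply continuous_ext_loc with (h0 alpha H t).
- generalize (locally_pos x Hx). apply filter_imp. intros y Hy. symmetry; apply h_eq_h0; auto.
- apply (@ex_derive_continuous R_AbsRing R_NormedModule). eexists. apply h0_derive; auto.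
Qed.

Lemma h_cont_0 alpha H t : 1 < alpha < 2 -> (2 - alpha)/2 < H < 1/2 -> 0 < t ->
  continuous (h alpha H t) 0.
Proof.
intros Ha HH Ht. apply filterlim_locally. intros eps.
assert (Hh0 : h alpha H t 0 = 0) by (unfold h; destruct (Rlt_dec 0 0); [lra|reflexivity]).
rewrite Hh0.
assert (Hq : 0 < eps / (2 * t)) by (apply Rdiv_lt_0_compat; [apply cond_pos| lra]).
set (d := exp (ln (eps / (2 * t)) / (1 - 2 * H))).
assert (Hd : 0 < d) by apply exp_pos.
exists (mkposreal d Hd). intros y Hy. simpl in Hy.
unfold ball in Hy; simpl in Hy; unfold AbsRing_ball, abs, minus, plus, opp in Hy; simpl in Hy.
unfold ball; simpl; unfold AbsRing_ball, abs, minus, plus, opp; simpl.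
rewrite Ropp_0, Rplus_0_r in *.
destruct (Rlt_dec 0 y) as [Hy0|Hy0].
- rewrite Rabs_pos_eq in Hy by lra.
  rewrite h_eq_h0 by auto. eapply Rle_lt_trans. apply h0_bound_small; auto.
  assert (ln y < ln d) by (apply ln_increasing; auto).
  unfold d in H0. rewrite ln_exp in H0.
  assert ((1 - 2 * H) * ln y < ln (eps / (2 * t))).
  { apply Rmult_lt_reg_r with (/ (1 - 2 * H)). apply Rinv_0_lt_compat; lra.
    replace ((1 - 2 * H) * ln y * / (1 - 2 * H)) with (ln y) by (field; lra). exact H0. }
  apply exp_increasing in H1. rewrite exp_ln in H1 by auto.
  apply Rmult_lt_reg_r with (/ (2 * t)). apply Rinv_0_lt_compat; lra.
  replace (2 * t * exp ((1 - 2 * H) * ln y) * / (2 * t)) with (exp ((1 - 2 * H) * ln y)) by (field; lra).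
  exact H1.
- unfold h. destruct (Rlt_dec 0 y); [lra|]. rewrite Rabs_R0. apply cond_pos.
Qed.

Lemma g_cont alpha H t r x : 1 < alpha < 2 -> (2 - alpha)/2 < H < 1/2 -> 0 < t -> 0 <= x ->
  continuous (fun xi => h alpha H t xi * cos (xi * r)) x.
Proof.
intros Ha HH Ht Hx.
apply (continuous_mult (h alpha H t) (fun xi => cos (xi * r))).
- destruct Hx as [Hx|Hx]. apply h_cont_pos; auto. subst; apply h_cont_0; auto.
- apply (@ex_derive_continuous R_AbsRing R_NormedModule). auto_derive. auto.
Qed.

Lemma g_ex_RInt alpha H t r b : 1 < alpha < 2 -> (2 - alpha)/2 < H < 1/2 -> 0 < t -> 0 <= b ->
  ex_RInt (fun xi => h alpha H t xi * cos (xi * r)) 0 b.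
Proof.
intros Ha HH Ht Hb. apply (@ex_RInt_continuous R_CompleteNormedModule). intros z Hz.
rewrite Rmin_left in Hz by auto. apply g_cont; auto; lra.
Qed.

Definition phi alpha H t r x := dh0 alpha H t x * sin (x * r).
Definition FF alpha H t r x := h0 alpha H t x * sin (x * r).

Lemma phi_cont alpha H t r x : 0 < x -> continuous (phi alpha H t r) x.
Proof.
intros Hx. apply (@ex_derive_continuous R_AbsRing R_NormedModule).
unfold phi, dh0. auto_derive. repeat split; lra.
Qed.

Lemma ibp alpha H t r a b : 1 < alpha < 2 -> (2 - alpha)/2 < H < 1/2 -> 0 < t -> 0 < r ->
  0 < a <= b ->
  ex_RInt (phi alpha H t r) a b /\
  RInt (fun xi => h alpha H t xi * cos (xi * r)) a b =
    ((FF alpha H t r b - FF alpha H t r a) - RInt (phi alpha H t r) a b) / r.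
Proof.
intros Ha HH Ht Hr Hab.
set (D := fun x => phi alpha H t r x + h0 alpha H t x * (cos (x * r) * r)).
assert (HD : forall x, Rmin a b <= x <= Rmax a b -> is_derive (FF alpha H t r) x (D x)).
{ intros x Hx. rewrite Rmin_left, Rmax_right in Hx by lra.
  assert (H1 := h0_derive alpha H t x ltac:(lra)).
  assert (H2 : is_derive (fun x => sin (x * r)) x (cos (x * r) * r)) by (auto_derive; auto; ring).
  generalize (is_derive_mult _ _ _ _ _ H1 H2 ltac:(intros; apply Rmult_comm)).
  unfold D, phi, FF. apply is_derive_ext. reflexivity. }
assert (HC : forall x, Rmin a b <= x <= Rmax a b -> continuous D x).
{ intros x Hx. rewrite Rmin_left, Rmax_right in Hx by lra.
  apply (@ex_derive_continuous R_AbsRing R_NormedModule).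
  unfold D, phi, dh0, h0. auto_derive. repeat split; lra. }
assert (Hphi : ex_RInt (phi alpha H t r) a b).
{ apply (@ex_RInt_continuous R_CompleteNormedModule). intros z Hz.
  rewrite Rmin_left, Rmax_right in Hz by lra. apply phi_cont; lra. }
split; auto.
assert (HI := is_RInt_derive _ _ _ _ HD HC).
assert (HI2 := is_RInt_minus _ _ _ _ _ _ HI (RInt_correct _ _ _ Hphi)).
assert (HI3 := is_RInt_scal _ _ _ (/ r) _ HI2).
assert (HI4 : is_RInt (fun xi => h alpha H t xi * cos (xi * r)) a b
   (scal (/ r) (minus (minus (FF alpha H t r b) (FF alpha H t r a)) (RInt (phi alpha H t r) a b)))).
{ eapply is_RInt_ext with (2 := HI3).
  intros x Hx. rewrite Rmin_left, Rmax_right in Hx by lra.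
  rewrite h_eq_h0 by lra. unfold D. change (/ r * ((phi alpha H t r x + h0 alpha H t x * (cos (x * r) * r)) - phi alpha H t r x) = h0 alpha H t x * cos (x * r)).
  field. lra. }
rewrite (is_RInt_unique _ _ _ _ HI4).
change (/ r * ((FF alpha H t r b - FF alpha H t r a) - RInt (phi alpha H t r) a b) = ((FF alpha H t r b - FF alpha H t r a) - RInt (phi alpha H t r) a b) / r).
field. lra.
Qed.

Lemma piece_bound (f : R -> R) K b1 b2 : 0 < b1 <= b2 -> 0 <= K -> ex_RInt f b1 b2 ->
  (forall x, b1 <= x -> Rabs (f x) <= K / (x * x)) ->
  Rabs (RInt f b1 b2) <= K / b1 - K / b2.
Proof.
intros Hb HK Hf Hbd.
assert (Hg : is_RInt (fun x => K / (x * x)) b1 b2 (K / b1 - K / b2)).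
{ assert (HD : forall x, Rmin b1 b2 <= x <= Rmax b1 b2 -> is_derive (fun x => - (K / x)) x (K / (x * x))).
  { intros x Hx. rewrite Rmin_left, Rmax_right in Hx by lra. auto_derive. lra. field. lra. }
  assert (HC : forall x, Rmin b1 b2 <= x <= Rmax b1 b2 -> continuous (fun x => K / (x * x)) x).
  { intros x Hx. rewrite Rmin_left, Rmax_right in Hx by lra.
    apply (@ex_derive_continuous R_AbsRing R_NormedModule). auto_derive. nra. }
  generalize (is_RInt_derive _ _ _ _ HD HC). intros HI.
  replace (K / b1 - K / b2) with (minus (- (K / b2)) (- (K / b1))); auto.
  unfold minus, plus, opp; simpl; ring. }
apply (norm_RInt_le f (fun x => K / (x * x)) b1 b2 _ _ (proj2 Hb)).
- intros x Hx. apply Hbd; lra.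
- apply (@RInt_correct R_CompleteNormedModule); auto.
- exact Hg.
Qed.

Lemma tail_lim (f : R -> R) a K : 0 < a -> 0 < K ->
  (forall b, a <= b -> ex_RInt f a b) ->
  (forall x, a <= x -> Rabs (f x) <= K / (x * x)) ->
  exists L : R, is_lim (fun b => RInt f a b) p_infty L /\ Rabs L <= K / a.
Proof.
intros Ha HK Hex Hbd.
set (P := fun b => RInt f a b).
assert (Hdiff : forall b1 b2, a <= b1 <= b2 -> Rabs (P b2 - P b1) <= K / b1).
{ intros b1 b2 Hb. unfold P.
  assert (E1 : ex_RInt f b1 b2) by (apply (@ex_RInt_Chasles_2 R_CompleteNormedModule) with a; auto; apply Hex; lra).
  rewrite <- (@RInt_Chasles R_CompleteNormedModule f a b1 b2); auto. 2: apply Hex; lra.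
  replace (plus (RInt f a b1) (RInt f b1 b2) - RInt f a b1) with (RInt f b1 b2)
    by (unfold plus; simpl; lra).
  eapply Rle_trans. apply (piece_bound f K). lra. lra. exact E1. intros; apply Hbd; lra.
  assert (0 < K / b2) by (apply Rdiv_lt_0_compat; lra). lra. }
set (F := filtermap P (Rbar_locally p_infty)).
assert (FP : ProperFilter F) by (apply filtermap_proper_filter; apply Rbar_locally_filter).
assert (FC : cauchy F).
{ intros eps. set (N := a + K / eps + 1).
  assert (HKe : 0 < K / eps) by (apply Rdiv_lt_0_compat; [lra|apply cond_pos]).
  exists (P N). unfold F, filtermap. exists N. intros x Hx.
  change (Rabs (P x - P N) < eps).
  eapply Rle_lt_trans. apply (Hdiff N x). unfold N in *; lra.
  assert (Heps := cond_pos eps).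
  apply Rmult_lt_reg_r with (N / eps). apply Rdiv_lt_0_compat; unfold N in *; lra.
  replace (K / N * (N / eps)) with (K / eps) by (field; unfold N in *; lra).
  replace (eps * (N / eps)) with N by (field; lra). unfold N in *; lra. }
set (l := lim F).
assert (Hl : is_lim P p_infty l).
{ unfold is_lim. simpl. apply filterlim_locally. intros eps.
  exact (@complete_cauchy R_CompleteSpace F FP FC eps). }
exists l. split; auto.
assert (Hup : Rbar_le l (K / a)).
{ apply (is_lim_le_loc P (fun _ => K / a) p_infty l (K / a)); auto. 2: apply is_lim_const.
  exists a. intros x Hx. generalize (Hdiff a x ltac:(lra)).
  unfold P at 2. rewrite RInt_point. intros HH. apply Rabs_le_between in HH. unfold zero in HH; simpl in HH. lra. }
assert (Hlo : Rbar_le (- (K / a)) l).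
{ apply (is_lim_le_loc (fun _ => - (K / a)) P p_infty (- (K / a)) l); auto. 2: apply is_lim_const.
  exists a. intros x Hx. generalize (Hdiff a x ltac:(lra)).
  unfold P at 2. rewrite RInt_point. intros HH. apply Rabs_le_between in HH. unfold zero in HH; simpl in HH. lra. }
simpl in Hup, Hlo. apply Rabs_le. split; assumption.
Qed.

Lemma abs_sin_le1 x : Rabs (sin x) <= 1.
Proof. apply Rabs_le. generalize (SIN_bound x); lra. Qed.
Lemma abs_cos_le1 x : Rabs (cos x) <= 1.
Proof. apply Rabs_le. generalize (COS_bound x); lra. Qed.

Theorem mainTheorem12 (alpha H t : R) :
  1 < alpha < 2 ->
  (2 - alpha) / 2 < H < 1 / 2 ->
  0 < t ->
  exists C M : R, 0 < M /\
    forall r : R, M < r ->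
      exists I : R,
        is_improper_RInt_0_oo (fun xi => h alpha H t xi * cos (xi * r)) I /\
        Rabs I <= C * Rpower r ((H - 1) / 2).
Proof.
intros Ha HH Ht.
set (K := alpha * (2 * t + 1) + 3 * (1 + 2 * t)).
assert (HK : 0 < K) by (unfold K; nra).
exists (4 * t + K), 1. split; [lra|].
intros r Hr.
set (g := fun xi => h alpha H t xi * cos (xi * r)).
assert (Hsr : 1 < sqrt r).
{ rewrite <- sqrt_1. apply sqrt_lt_1_alt; lra. }
assert (Hsr2 : sqrt r < r) by (apply sqrt_less_alt; lra).
set (a := / sqrt r).
assert (Ha0 : 0 < a) by (apply Rinv_0_lt_compat; lra).
assert (Ha1 : a <= 1).
{ unfold a. rewrite <- Rinv_1. left. apply Rinv_lt_contravar; lra. }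
assert (Hphi_ex : forall b, a <= b -> ex_RInt (phi alpha H t r) a b).
{ intros b Hb. apply (proj1 (ibp alpha H t r a b Ha HH Ht ltac:(lra) ltac:(lra))). }
assert (Hphi_bd : forall x, a <= x -> Rabs (phi alpha H t r x) <= K / (x * x)).
{ intros x Hx. unfold phi. rewrite Rabs_mult.
  assert (HB := dh0_bound alpha H t x Ha HH Ht ltac:(lra)). fold K in HB.
  generalize (abs_sin_le1 (x * r)) (Rabs_pos (sin (x * r))) (Rabs_pos (dh0 alpha H t x)); intros.
  apply Rle_trans with (Rabs (dh0 alpha H t x) * 1). apply Rmult_le_compat_l; auto. lra. }
destruct (tail_lim (phi alpha H t r) a K Ha0 HK Hphi_ex Hphi_bd) as [L [HL HLb]].
assert (HFF : is_lim (FF alpha H t r) p_infty 0).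
{ unfold is_lim. simpl. apply filterlim_locally. intros eps.
  assert (Heps := cond_pos eps).
  exists (1 + / eps). intros x Hx.
  assert (Hie : 0 < / eps) by (apply Rinv_0_lt_compat; auto).
  change (Rabs (FF alpha H t r x - 0) < eps). rewrite Rminus_0_r.
  unfold FF. rewrite Rabs_mult.
  assert (Hb := h0_bound_ge1 alpha H t x Ha HH Ht ltac:(lra)).
  generalize (abs_sin_le1 (x * r)) (Rabs_pos (sin (x * r))) (Rabs_pos (h0 alpha H t x)); intros.
  apply Rle_lt_trans with (/ x).
  { apply Rle_trans with (Rabs (h0 alpha H t x) * 1). apply Rmult_le_compat_l; auto. lra. }
  rewrite <- (Rinv_inv eps). apply Rinv_lt_contravar. apply Rmult_lt_0_compat; lra. lra. }
set (I := RInt g 0 a + / r * ((0 - FF alpha H t r a) - L)).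
exists I. split.
- split.
  + intros Rb HRb. apply g_ex_RInt; auto.
  + assert (H1 : is_lim (fun b => (FF alpha H t r b - FF alpha H t r a) - RInt (phi alpha H t r) a b)
                   p_infty ((0 - FF alpha H t r a) - L)).
    { apply is_lim_minus'; [apply is_lim_minus'; [exact HFF| apply is_lim_const] | exact HL]. }
    assert (H2 := is_lim_scal_l _ (/ r) _ _ H1). simpl in H2.
    assert (H3 := is_lim_plus' _ _ _ _ _ (is_lim_const (RInt g 0 a) p_infty) H2).
    apply (is_lim_ext_loc _ _ _ _) with (2 := H3).
    exists a. intros b Hb.
    destruct (ibp alpha H t r a b Ha HH Ht ltac:(lra) ltac:(lra)) as [_ Heq].
    fold g in Heq |- *.
    rewrite <- (@RInt_Chasles R_CompleteNormedModule g 0 a b).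
    2: apply g_ex_RInt; auto; lra.
    2: { apply (@ex_RInt_Chasles_2 R_CompleteNormedModule) with 0. lra. apply g_ex_RInt; auto; lra. }
    change (RInt g 0 a + / r * (FF alpha H t r b - FF alpha H t r a - RInt (phi alpha H t r) a b) =
            RInt g 0 a + RInt g a b).
    rewrite Heq. unfold Rdiv. ring.
-
  set (B := 2 * t).
  assert (Hg0 : Rabs (RInt g 0 a) <= (a - 0) * B).
  { apply abs_RInt_le_const. lra. apply g_ex_RInt; auto; lra.
    intros x Hx. unfold g. rewrite Rabs_mult.
    generalize (abs_cos_le1 (x * r)) (Rabs_pos (cos (x * r))) (Rabs_pos (h alpha H t x)); intros.
    assert (Rabs (h alpha H t x) <= B).
    { destruct (Rlt_dec 0 x) as [Hx0|Hx0].
      - rewrite h_eq_h0 by auto. apply h0_bound_le1; auto; lra.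
      - unfold h. destruct (Rlt_dec 0 x); [lra|]. rewrite Rabs_R0. unfold B; lra. }
    apply Rle_trans with (Rabs (h alpha H t x) * 1). apply Rmult_le_compat_l; auto. lra. }
  assert (HFa : Rabs (FF alpha H t r a) <= B).
  { unfold FF. rewrite Rabs_mult.
    generalize (abs_sin_le1 (a * r)) (Rabs_pos (sin (a * r))) (Rabs_pos (h0 alpha H t a)); intros.
    assert (Rabs (h0 alpha H t a) <= B) by (apply h0_bound_le1; auto).
    apply Rle_trans with (Rabs (h0 alpha H t a) * 1). apply Rmult_le_compat_l; auto. lra. }
  assert (HI : Rabs I <= a * B + / r * (B + K / a)).
  { unfold I. eapply Rle_trans. apply Rabs_triang.
    rewrite Rabs_mult, (Rabs_pos_eq (/ r)) by (left; apply Rinv_0_lt_compat; lra).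
    apply Rplus_le_compat. lra.
    apply Rmult_le_compat_l. left; apply Rinv_0_lt_compat; lra.
    replace (0 - FF alpha H t r a - L) with (- (FF alpha H t r a) + - L) by ring.
    eapply Rle_trans. apply Rabs_triang. rewrite !Rabs_Ropp. lra. }
  assert (Hs0 : 0 < sqrt r) by lra.
  assert (Heq1 : / r * (K / a) = K * a).
  { unfold a. rewrite <- (sqrt_sqrt r) at 1 by lra. field. lra. }
  assert (Hrs : / r <= a).
  { unfold a. left. apply Rinv_lt_contravar; nra. }
  assert (HB0 : 0 < B) by (unfold B; lra).
  assert (HI2 : Rabs I <= (4 * t + K) * a).
  { eapply Rle_trans. apply HI. rewrite Rmult_plus_distr_l, Heq1.
    assert (/ r * B <= a * B) by (apply Rmult_le_compat_r; lra).
    unfold B in *. lra. }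
  eapply Rle_trans. apply HI2. apply Rmult_le_compat_l. lra.
  unfold a. rewrite <- Rpower_sqrt by lra. unfold Rpower.
  rewrite <- exp_Ropp. apply exp_mono.
  assert (0 < ln r) by (rewrite <- ln_1; apply ln_increasing; lra).
  nra.
Qed.
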